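(* Let $X$ be an infinite-dimensional separable Banach space over $\mathbb{K}\in\{\mathbb{R},\mathbb{C}\}$, and let $T, S \in \mathcal{B}(X)$ with $T = \lambda I + S$ for some $\lambda \in \mathbb{K}$. Suppose $T$ is hypercyclic. Then the following assertions are equivalent: (i) $T$ satisfies the Hypercyclicity Criterion; (ii) $T$ satisfies the Cyclicity Criterion; (iii) $S$ satisfies the Cyclicity Criterion; (iv) $S \oplus S$ is cyclic on $X \oplus X$; (v) $T \oplus T$ is cyclic on $X \oplus X$; (vi) $T \oplus T$ is hypercyclic on $X \oplus X$.
   Context: $\mathcal{B}(X)$ denotes the algebra of bounded linear operators on $X$. An operator $T \in \mathcal{B}(X)$ is hypercyclic if there is $x \in X$ with $\{T^n x : n \ge 0\}$ dense in $X$; it is cyclic if there is $x\in X$ with $\operatorname{span}\{T^n x : n\ge 0\}$ dense in $X$. $T\oplus T$ denotes the operator $(x,y)\mapsto (Tx,Ty)$ on $X\oplus X$. $T$ satisfies the Hypercyclicity Criterion if there exist dense subsets $X_0, Y_0 \subseteq X$, an increasing sequence $(n_k)_{k\ge1}$ of positive integers, and maps (not necessarily linear or continuous) $S_{n_k}: Y_0 \to X$ such that: $T^{n_k}x \to 0$ for every $x \in X_0$; $S_{n_k}y \to 0$ for every $y \in Y_0$; and $T^{n_k}S_{n_k}y \to y$ for every $y \in Y_0$. An operator $A\in\mathcal{B}(X)$ satisfies the Cyclicity Criterion if there exist dense subsets $V, W \subseteq X$, a sequence $(p_k)_{k\ge1}$ of polynomials in $\mathbb{K}[x]$, and maps (not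 necessarily linear or continuous) $S_k : W \to X$ such that: $p_k(A)x \to 0$ for every $x \in V$; $S_k x \to 0$ for every $x \in W$; and $p_k(A)S_k x \to x$ for every $x \in W$. *)

(* Defs.v *)
From Stdlib Require Import Reals List.
Open Scope R_scope.

Record Scal := {
  sK :> Type;
  s0 : sK; s1 : sK;
  sadd : sK -> sK -> sK;
  smul : sK -> sK -> sK;
  sopp : sK -> sK;
  sabs : sK -> R }.

Definition RScal : Scal :=
  {| sK := R; s0 := 0; s1 := 1; sadd := Rplus; smul := Rmult;
     sopp := Ropp; sabs := Rabs |}.

(* complex numbers as pairs (re, im) *)
Definition Cnum := (R * R)%type.
Definition Cadd (z w : Cnum) : Cnum := (fst z + fst w, snd z + snd w).
Definition Cmul (z w : Cnum) : Cnum :=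
  (fst z * fst w - snd z * snd w, fst z * snd w + snd z * fst w).
Definition Copp (z : Cnum) : Cnum := (- fst z, - snd z).
Definition Cabs (z : Cnum) : R := sqrt (fst z * fst z + snd z * snd z).

Definition CScal : Scal :=
  {| sK := Cnum; s0 := (0, 0); s1 := (1, 0); sadd := Cadd; smul := Cmul;
     sopp := Copp; sabs := Cabs |}.

Inductive KKind := KReal | KComplex.
Definition Kof (k : KKind) : Scal :=
  match k with KReal => RScal | KComplex => CScal end.

Record VecOps (K : Scal) := {
  vcar :> Type;
  vzero : vcar;
  vadd : vcar -> vcar -> vcar;
  vopp : vcar -> vcar;
  vscal : K -> vcar -> vcar;
  vnorm : vcar -> R }.
Arguments vcar {K} _.
Arguments vzero {K} _.
Arguments vadd {K} _ _ _.
Arguments vopp {K} _ _.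
Arguments vscal {K} _ _ _.
Arguments vnorm {K} _ _.

Section Generic.
Context {K : Scal} (X : VecOps K).

Definition vsub (x y : X) : X := vadd X x (vopp X y).
Definition dist (x y : X) : R := vnorm X (vsub x y).

Definition seq_conv (u : nat -> X) (l : X) : Prop :=
  forall eps, eps > 0 -> exists N, forall k, (N <= k)%nat -> dist (u k) l < eps.

Definition cauchy (u : nat -> X) : Prop :=
  forall eps, eps > 0 -> exists N, forall m n, (N <= m)%nat -> (N <= n)%nat ->
    dist (u m) (u n) < eps.

Definition dense (D : X -> Prop) : Prop :=
  forall y eps, eps > 0 -> exists x, D x /\ dist x y < eps.

Definition separable : Prop :=
  exists d : nat -> X, dense (fun x => exists n, x = d n).

Fixpoint lincomb (l : list (K * X)) : X :=
  match l with
  | nil => vzero X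
  | p :: l' => vadd X (vscal X (fst p) (snd p)) (lincomb l')
  end.

Definition finite_dim : Prop :=
  exists vs : list X, forall y : X, exists l : list (K * X),
    (forall p, In p l -> In (snd p) vs) /\ y = lincomb l.

Definition infinite_dim : Prop := ~ finite_dim.

Definition bounded_linear (T : X -> X) : Prop :=
  (forall x y, T (vadd X x y) = vadd X (T x) (T y)) /\
  (forall a x, T (vscal X a x) = vscal X a (T x)) /\
  (exists M, forall x, vnorm X (T x) <= M * vnorm X x).

Definition itr (T : X -> X) (n : nat) (x : X) : X := Nat.iter n T x.

(* p(A) x for the polynomial p = c_0 + c_1 t + ... (coefficient list [c_0; c_1; ...]),
   i.e. sum_k c_k A^k x *)
Fixpoint peval (A : X -> X) (p : list K) (x : X) : X :=
  match p with
  | nil => vzero X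
  | c :: p' => vadd X (vscal X c x) (peval A p' (A x))
  end.

Definition hypercyclic (T : X -> X) : Prop :=
  exists x, dense (fun y => exists n, y = itr T n x).

(* span{T^n x : n >= 0} = { p(T) x : p polynomial } *)
Definition cyclic (T : X -> X) : Prop :=
  exists x, dense (fun y => exists p : list K, y = peval T p x).

Definition HypercyclicityCriterion (T : X -> X) : Prop :=
  exists (X0 Y0 : X -> Prop) (n : nat -> nat) (Sk : nat -> X -> X),
    dense X0 /\ dense Y0 /\
    (forall k, (0 < n k)%nat) /\ (forall k, (n k < n (Datatypes.S k))%nat) /\
    (forall x, X0 x -> seq_conv (fun k => itr T (n k) x) (vzero X)) /\
    (forall y, Y0 y -> seq_conv (fun k => Sk k y) (vzero X)) /\
    (forall y, Y0 y -> seq_conv (fun k => itr T (n k) (Sk k y)) y).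

Definition CyclicityCriterion (A : X -> X) : Prop :=
  exists (V W : X -> Prop) (p : nat -> list K) (S : nat -> X -> X),
    dense V /\ dense W /\
    (forall x, V x -> seq_conv (fun k => peval A (p k) x) (vzero X)) /\
    (forall x, W x -> seq_conv (fun k => S k x) (vzero X)) /\
    (forall x, W x -> seq_conv (fun k => peval A (p k) (S k x)) x).

End Generic.

Definition prodOps {K : Scal} (X : VecOps K) : VecOps K :=
  @Build_VecOps K (vcar X * vcar X)%type
     (vzero X, vzero X)
     (fun p q => (vadd X (fst p) (fst q), vadd X (snd p) (snd q)))
     (fun p => (vopp X (fst p), vopp X (snd p)))
     (fun a p => (vscal X a (fst p), vscal X a (snd p)))
     (fun p => Rmax (vnorm X (fst p)) (vnorm X (snd p))).

Definition dsum {K : Scal} {X : VecOps K} (T : X -> X) : prodOps X -> prodOps X :=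
  fun p => (T (fst p), T (snd p)).

Record Banach (K : Scal) := {
  bops :> VecOps K;
  ax_addA : forall x y z : bops, vadd bops x (vadd bops y z) = vadd bops (vadd bops x y) z;
  ax_addC : forall x y : bops, vadd bops x y = vadd bops y x;
  ax_add0 : forall x : bops, vadd bops x (vzero bops) = x;
  ax_addN : forall x : bops, vadd bops x (vopp bops x) = vzero bops;
  ax_scal1 : forall x : bops, vscal bops (s1 K) x = x;
  ax_scalA : forall (a b : K) (x : bops), vscal bops a (vscal bops b x) = vscal bops (smul K a b) x;
  ax_scalDl : forall (a b : K) (x : bops),
      vscal bops (sadd K a b) x = vadd bops (vscal bops a x) (vscal bops b x);
  ax_scalDr : forall (a : K) (x y : bops),
      vscal bops a (vadd bops x y) = vadd bops (vscal bops a x) (vscal bops a y);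
  ax_norm_eq0 : forall x : bops, vnorm bops x = 0 -> x = vzero bops;
  ax_norm_triangle : forall x y : bops, vnorm bops (vadd bops x y) <= vnorm bops x + vnorm bops y;
  ax_norm_scal : forall (a : K) (x : bops), vnorm bops (vscal bops a x) = sabs K a * vnorm bops x;
  ax_complete : forall u : nat -> bops, cauchy bops u -> exists l, seq_conv bops u l }.

(* Main.v *)
From Stdlib Require Import Reals List Lra Lia Cantor Classical ClassicalEpsilon.
Require Import Defs.
Import Defs.
Open Scope R_scope.

Class SF (K : Scal) := {
  HK0 : sadd K (s0 K) (s0 K) = s0 K;
  Habs0 : sabs K (s0 K) = 0;
  Habs : forall a, 0 <= sabs K a;
  m1 : K;
  Hm1 : sadd K m1 (s1 K) = s0 K;
  Hm1a : sabs K m1 = 1;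
  Hcomm : forall a b, smul K a b = smul K b a;
  emb : R -> K;
  Hemb : forall t, sabs K (emb t) = Rabs t }.

Set Default Proof Using "All".
Section Gen.
Context {K : Scal} {sf : SF K} (B : Banach K).

Notation vad := (vadd B).
Notation vop := (vopp B).
Notation vz := (vzero B).
Notation vsc := (vscal B).
Notation nrm := (vnorm B).
Notation dst := (Defs.dist B).

Lemma add0l x : vad vz x = x.
Proof. rewrite ax_addC; apply ax_add0. Qed.
Lemma addNl x : vad (vop x) x = vz.
Proof. rewrite ax_addC; apply ax_addN. Qed.
Lemma add_cancel x y z : vad x y = vad x z -> y = z.
Proof.
  intro H. rewrite <- (add0l y), <- (add0l z), <- (addNl x), <- !ax_addA, H. reflexivity.
Qed.
Lemma opp_uniq a x : vad a x = vz -> a = vop x.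
Proof.
  intro H. apply (add_cancel x). rewrite ax_addC, H, ax_addN. reflexivity.
Qed.
Lemma scal0 x : vsc (s0 K) x = vz.
Proof.
  apply (add_cancel (vsc (s0 K) x)). rewrite <- ax_scalDl, HK0, ax_add0. reflexivity.
Qed.
Lemma scalz a : vsc a vz = vz.
Proof.
  apply (add_cancel (vsc a vz)). rewrite <- ax_scalDr, !ax_add0. reflexivity.
Qed.
Lemma scalm1 x : vsc m1 x = vop x.
Proof.
  apply opp_uniq. rewrite <- (ax_scal1 K B x) at 2. rewrite <- ax_scalDl, Hm1. apply scal0.
Qed.
Lemma oppz : vop vz = vz.
Proof. symmetry. apply opp_uniq. apply ax_add0. Qed.
Lemma oppK x : vop (vop x) = x.
Proof. symmetry. apply opp_uniq. apply ax_addN. Qed.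
Lemma opp_add x y : vop (vad x y) = vad (vop x) (vop y).
Proof.
  symmetry. apply opp_uniq.
  rewrite (ax_addC K B x y), ax_addA, <- (ax_addA K B (vop x)), addNl, ax_add0, addNl. reflexivity.
Qed.
Lemma norm0 : nrm vz = 0.
Proof. rewrite <- (scal0 vz), ax_norm_scal, Habs0. ring. Qed.
Lemma norm_opp x : nrm (vop x) = nrm x.
Proof. rewrite <- scalm1, ax_norm_scal, Hm1a. ring. Qed.
Lemma norm_ge0 x : 0 <= nrm x.
Proof.
  assert (H := ax_norm_triangle K B x (vop x)). rewrite ax_addN, norm0, norm_opp in H. lra.
Qed.
Lemma dist_eq x y : dst x y = nrm (vad x (vop y)).
Proof. reflexivity. Qed.
Lemma dist0 x : dst x vz = nrm x.
Proof. unfold Defs.dist, vsub. rewrite oppz, ax_add0. reflexivity. Qed.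
Lemma dist_ge0 x y : 0 <= dst x y.
Proof. apply norm_ge0. Qed.
Lemma dist_sym x y : dst x y = dst y x.
Proof.
  unfold Defs.dist, vsub. rewrite <- norm_opp, opp_add, oppK, ax_addC. reflexivity.
Qed.
Lemma sub_split x y z : vad x (vop z) = vad (vad x (vop y)) (vad y (vop z)).
Proof.
  rewrite <- ax_addA, (ax_addA K B (vop y)), addNl, add0l. reflexivity.
Qed.
Lemma dist_tri x y z : dst x z <= dst x y + dst y z.
Proof. unfold Defs.dist, vsub. rewrite (sub_split x y z). apply ax_norm_triangle. Qed.
Lemma sub_add x y a b : vad (vad x y) (vop (vad a b)) = vad (vad x (vop a)) (vad y (vop b)).
Proof.
  rewrite opp_add. rewrite <- !ax_addA. f_equal. rewrite !ax_addA. f_equal. apply ax_addC.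
Qed.
Lemma dist_add x y a b : dst (vad x y) (vad a b) <= dst x a + dst y b.
Proof. unfold Defs.dist, vsub. rewrite sub_add. apply ax_norm_triangle. Qed.
Lemma dist_self x : dst x x = 0.
Proof. unfold Defs.dist, vsub. rewrite ax_addN. apply norm0. Qed.

Definition addit (f : B -> B) := forall x y, f (vad x y) = vad (f x) (f y).
Definition homog (f : B -> B) := forall a x, f (vsc a x) = vsc a (f x).
Definition bnd (f : B -> B) := exists M, 0 < M /\ forall x, nrm (f x) <= M * nrm x.

Lemma addit_0 f : addit f -> f vz = vz.
Proof. intro H. apply (add_cancel (f vz)). rewrite <- H, !ax_add0. reflexivity. Qed.
Lemma addit_opp f x : addit f -> f (vop x) = vop (f x).
Proof. intro H. apply opp_uniq. rewrite <- H, addNl. apply addit_0, H. Qed.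
Lemma addit_dist f x y : addit f -> dst (f x) (f y) = nrm (f (vad x (vop y))).
Proof. intro H. unfold Defs.dist, vsub. rewrite H, (addit_opp f y H). reflexivity. Qed.
Lemma bnd_dist f M x y : addit f -> (forall x, nrm (f x) <= M * nrm x) ->
  dst (f x) (f y) <= M * dst x y.
Proof. intros H HM. rewrite addit_dist; auto. Qed.

Lemma bl_addit f : bounded_linear B f -> addit f.
Proof. intros [H _]. exact H. Qed.
Lemma bl_homog f : bounded_linear B f -> homog f.
Proof. intros [_ [H _]]. exact H. Qed.
Lemma bl_bnd f : bounded_linear B f -> bnd f.
Proof.
  intros [_ [_ [M HM]]]. exists (Rmax M 1). split. apply Rlt_le_trans with 1; [lra|apply Rmax_r].
  intro x. eapply Rle_trans. apply HM. apply Rmult_le_compat_r. apply norm_ge0. apply Rmax_l.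
Qed.


Lemma add4 a b c d : vad (vad a b) (vad c d) = vad (vad a c) (vad b d).
Proof.
  rewrite <- !ax_addA. f_equal. rewrite !ax_addA. f_equal. apply ax_addC.
Qed.

Lemma itr_S f n x : itr B f (S n) x = f (itr B f n x).
Proof. reflexivity. Qed.
Lemma itr_comm_g f g n x : (forall y, g (f y) = f (g y)) -> g (itr B f n x) = itr B f n (g x).
Proof. intro H. induction n; simpl; auto. rewrite H. f_equal. exact IHn. Qed.
Lemma itr_comm f n x : f (itr B f n x) = itr B f n (f x).
Proof. apply itr_comm_g. auto. Qed.
Lemma itr_itr f n m x : itr B f n (itr B f m x) = itr B f m (itr B f n x).
Proof. unfold itr. rewrite <- !Nat.iter_add, Nat.add_comm. reflexivity. Qed.
Lemma itr_addit f n : addit f -> addit (itr B f n).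
Proof. intros H x y. induction n; simpl; auto. change (Nat.iter n f (vad x y)) with (itr B f n (vad x y)). rewrite IHn. apply H. Qed.
Lemma itr_homog f n : homog f -> homog (itr B f n).
Proof. intros H a x. induction n; simpl; auto. change (Nat.iter n f (vsc a x)) with (itr B f n (vsc a x)). rewrite IHn. apply H. Qed.
Lemma itr_bnd f n : bnd f -> bnd (itr B f n).
Proof.
  intros [M [HM HMb]]. induction n.
  - exists 1. split. lra. intro x. simpl. lra.
  - destruct IHn as [N [HN HNb]]. exists (M * N). split. apply Rmult_lt_0_compat; auto.
    intro x. rewrite itr_S. eapply Rle_trans. apply HMb. rewrite Rmult_assoc.
    apply Rmult_le_compat_l. lra. apply HNb.
Qed.

Lemma peval_addit A p : addit A -> addit (peval B A p).
Proof.
  intros HA. induction p as [|c p IH]; intros x y; simpl.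
  - rewrite ax_add0. reflexivity.
  - rewrite HA, IH, ax_scalDr. apply add4.
Qed.
Lemma peval_homog A p : homog A -> homog (peval B A p).
Proof.
  intros HA. induction p as [|c p IH]; intros a x; simpl.
  - rewrite scalz. reflexivity.
  - rewrite HA, IH, ax_scalDr, !ax_scalA, Hcomm. reflexivity.
Qed.
Lemma peval_bnd A p : bnd A -> bnd (peval B A p).
Proof.
  intros [M [HM HMb]]. induction p as [|c p IH].
  - exists 1. split. lra. intro x. simpl. rewrite norm0. assert (H:=norm_ge0 x). lra.
  - destruct IH as [N [HN HNb]]. exists (sabs K c + N * M + 1). split.
    assert (H:=Habs c). assert (0 < N*M) by (apply Rmult_lt_0_compat; auto). lra.
    intro x. simpl. eapply Rle_trans. apply ax_norm_triangle. rewrite ax_norm_scal.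
    assert (H1 := HNb (A x)). assert (H2 := HMb x). assert (H3 := norm_ge0 x).
    assert (nrm (peval B A p (A x)) <= N * M * nrm x).
    { eapply Rle_trans. apply H1. rewrite Rmult_assoc. apply Rmult_le_compat_l; lra. }
    nra.
Qed.
Lemma peval_comm A g p x : addit g -> homog g -> (forall y, g (A y) = A (g y)) ->
  g (peval B A p x) = peval B A p (g x).
Proof.
  intros Ha Hh Hc. revert x. induction p as [|c p IH]; intro x; simpl.
  - apply addit_0; auto.
  - rewrite Ha, Hh, IH, Hc. reflexivity.
Qed.
Lemma peval_peval A p q x : addit A -> homog A ->
  peval B A p (peval B A q x) = peval B A q (peval B A p x).
Proof.
  intros Ha Hh. apply peval_comm.
  apply peval_addit; auto. apply peval_homog; auto.
  intro y. symmetry. apply peval_comm; auto.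
Qed.

Fixpoint mono (n : nat) : list K :=
  match n with O => s1 K :: nil | S n => s0 K :: mono n end.
Lemma peval_mono A n x : peval B A (mono n) x = itr B A n x.
Proof.
  revert x. induction n; intro x; simpl.
  - rewrite ax_scal1, ax_add0. reflexivity.
  - rewrite scal0, add0l, IHn. symmetry. apply itr_comm.
Qed.

Lemma conv_map f u a : addit f -> bnd f -> seq_conv B u a -> seq_conv B (fun k => f (u k)) (f a).
Proof.
  intros Ha [M [HM Hb]] Hu eps Heps.
  destruct (Hu (eps / M)) as [N HN]. apply Rdiv_lt_0_compat; auto.
  exists N. intros k Hk. eapply Rle_lt_trans. apply (bnd_dist f M); auto.
  specialize (HN k Hk). apply Rmult_lt_compat_l with (r:=M) in HN; auto.
  unfold Rdiv in HN. rewrite <- Rmult_assoc, (Rmult_comm M eps), Rmult_assoc, Rinv_r, Rmult_1_r in HN; lra.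
Qed.
Lemma conv_ext u v a : (forall k, u k = v k) -> seq_conv B u a -> seq_conv B v a.
Proof. intros H Hu eps He. destruct (Hu eps He) as [N HN]. exists N. intros k Hk. rewrite <- H. auto. Qed.

Fixpoint padd (p q : list K) : list K :=
  match p, q with
  | nil, q => q
  | p, nil => p
  | a :: p', b :: q' => sadd K a b :: padd p' q'
  end.
Lemma peval_padd A p q x : addit A -> peval B A (padd p q) x = vad (peval B A p x) (peval B A q x).
Proof.
  intro HA. revert q x. induction p as [|a p IH]; intros q x.
  - simpl. rewrite add0l. reflexivity.
  - destruct q as [|b q].
    + simpl. rewrite ax_add0. reflexivity.
    + simpl. rewrite IH, ax_scalDl. apply add4.
Qed.
Lemma peval_map A mu q x : homog A -> peval B A (map (smul K mu) q) x = vsc mu (peval B A q x).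
Proof.
  intro HA. revert x. induction q as [|c q IH]; intro x; simpl.
  - rewrite scalz. reflexivity.
  - rewrite IH, ax_scalDr, ax_scalA. reflexivity.
Qed.
Lemma ptrans A C mu : addit C -> homog C -> (forall x, A x = vad (vsc mu x) (C x)) ->
  forall p, exists q, forall x, peval B A p x = peval B C q x.
Proof.
  intros Ha Hh HAC p. induction p as [|c p [q IH]].
  - exists nil. reflexivity.
  - exists (padd (c :: nil) (padd (map (smul K mu) q) (s0 K :: q))). intro x.
    rewrite !peval_padd, peval_map; auto. simpl. rewrite IH, HAC.
    rewrite (peval_addit C q Ha), (peval_homog C q Hh), scal0, add0l, ax_add0. reflexivity.
Qed.

End Gen.
Section Prod.
Context {K : Scal} {sf : SF K} (B : Banach K).

Lemma dist_prod (p q : prodOps B) : Defs.dist (prodOps B) p q =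
  Rmax (Defs.dist B (fst p) (fst q)) (Defs.dist B (snd p) (snd q)).
Proof. reflexivity. Qed.

Definition prodB : Banach K.
Proof.
  refine (@Build_Banach K (prodOps B) _ _ _ _ _ _ _ _ _ _ _ _).
  - intros [a b] [c d] [e f]; simpl; f_equal; apply ax_addA.
  - intros [a b] [c d]; simpl; f_equal; apply ax_addC.
  - intros [a b]; simpl; f_equal; apply ax_add0.
  - intros [a b]; simpl; f_equal; apply ax_addN.
  - intros [a b]; simpl; f_equal; apply ax_scal1.
  - intros s t [a b]; simpl; f_equal; apply ax_scalA.
  - intros s t [a b]; simpl; f_equal; apply ax_scalDl.
  - intros s [a b] [c d]; simpl; f_equal; apply ax_scalDr.
  - intros [a b]; simpl; intro H. assert (Ha := norm_ge0 B a). assert (Hb := norm_ge0 B b).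
    assert (H1 := Rmax_l (vnorm B a) (vnorm B b)). assert (H2 := Rmax_r (vnorm B a) (vnorm B b)).
    f_equal; apply ax_norm_eq0; lra.
  - intros [a b] [c d]; simpl. apply Rmax_lub.
    + eapply Rle_trans. apply ax_norm_triangle. apply Rplus_le_compat; apply Rmax_l.
    + eapply Rle_trans. apply ax_norm_triangle. apply Rplus_le_compat; apply Rmax_r.
  - intros s [a b]; simpl. rewrite !ax_norm_scal. apply RmaxRmult. apply Habs.
  - intros u Hu.
    assert (H1 : cauchy B (fun k => fst (u k))).
    { intros e He. destruct (Hu e He) as [N HN]. exists N. intros m n Hm Hn.
      eapply Rle_lt_trans. 2: apply (HN m n Hm Hn). rewrite dist_prod. apply Rmax_l. }
    assert (H2 : cauchy B (fun k => snd (u k))).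
    { intros e He. destruct (Hu e He) as [N HN]. exists N. intros m n Hm Hn.
      eapply Rle_lt_trans. 2: apply (HN m n Hm Hn). rewrite dist_prod. apply Rmax_r. }
    destruct (ax_complete K B _ H1) as [l1 L1]. destruct (ax_complete K B _ H2) as [l2 L2].
    exists (l1, l2). intros e He. destruct (L1 e He) as [N1 HN1]. destruct (L2 e He) as [N2 HN2].
    exists (Nat.max N1 N2). intros k Hk. rewrite dist_prod. simpl. apply Rmax_lub_lt.
    + apply HN1. lia.
    + apply HN2. lia.
Defined.

Lemma itr_dsum A n (a b : B) : itr (prodOps B) (dsum A) n (a, b) = (itr B A n a, itr B A n b).
Proof. induction n; simpl; auto. change (Nat.iter n (dsum A) (a, b)) with (itr (prodOps B) (dsum A) n (a, b)). rewrite IHn. reflexivity. Qed.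
Lemma peval_dsum A p (a b : B) : peval (prodOps B) (dsum A) p (a, b) = (peval B A p a, peval B A p b).
Proof. revert a b. induction p as [|c p IH]; intros a b; simpl; auto. change (dsum A (a, b)) with (A a, A b). fold (dsum A). rewrite IH. reflexivity. Qed.

Lemma dsum_bl A : bounded_linear B A -> bounded_linear (prodOps B) (dsum A).
Proof.
  intros HA. destruct (bl_bnd B A HA) as [M [HM HMb]].
  split; [|split].
  - intros [a b] [c d]; unfold dsum; simpl. rewrite !(bl_addit B A HA). reflexivity.
  - intros s [a b]; unfold dsum; simpl. rewrite !(bl_homog B A HA). reflexivity.
  - exists M. intros [a b]; unfold dsum; simpl. rewrite <- RmaxRmult by lra.
    apply Rmax_lub. eapply Rle_trans. apply HMb. apply Rmax_l.
    eapply Rle_trans. apply HMb. apply Rmax_r.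
Qed.
End Prod.
Section Anal.
Context {K : Scal} {sf : SF K} (B : Banach K).
Notation vad := (vadd B).
Notation vop := (vopp B).
Notation vz := (vzero B).
Notation vsc := (vscal B).
Notation nrm := (vnorm B).
Notation dst := (Defs.dist B).

Lemma avoid (e : B) : e <> vz -> forall l c r, 0 < r -> exists c' r', 0 < r' /\
  forall w, dst w c' < r' -> dst w c < r /\ ~ In w l.
Proof.
  intros He l. induction l as [|a l IH]; intros c r Hr.
  - exists c, r. split; auto.
  - destruct (IH c r Hr) as [c' [r' [Hr' Hc']]].
    destruct (Rle_or_lt (r'/2) (dst a c')) as [Ha|Ha].
    + exists c', (r'/2). split. lra. intros w Hw. destruct (Hc' w) as [H1 H2]. lra.
      split; auto. intros [E|E]; [subst a; lra|tauto].
    + assert (Hnu : 0 < nrm e).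
      { destruct (Rle_lt_or_eq_dec 0 (nrm e) (norm_ge0 B e)) as [h|h]; auto.
        exfalso. apply He. apply ax_norm_eq0. auto. }
      set (h := vsc (emb (3 * r' / 4 / nrm e)) e).
      assert (Hh : nrm h = 3 * r' / 4).
      { unfold h. rewrite ax_norm_scal, Hemb, Rabs_pos_eq. field. lra.
        unfold Rdiv. apply Rmult_le_pos. lra. left. apply Rinv_0_lt_compat. lra. }
      assert (Hd : dst (vad c' h) c' = 3 * r' / 4).
      { rewrite dist_eq, (ax_addC K B c' h), <- ax_addA, ax_addN, ax_add0. exact Hh. }
      exists (vad c' h), (r'/8). split. lra. intros w Hw.
      assert (H1 := dist_tri B w (vad c' h) c'). rewrite Hd in H1.
      destruct (Hc' w) as [H2 H3]. lra. split; auto.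
      intros [E|E]; [|tauto]. subst a.
      assert (H4 := dist_tri B (vad c' h) w c'). rewrite Hd, (dist_sym B _ w) in H4. lra.
Qed.

Lemma hc_often A z (e : B) : e <> vz -> dense B (fun y => exists n, y = itr B A n z) ->
  forall q eps N, 0 < eps -> exists n, (N < n)%nat /\ dst (itr B A n z) q < eps.
Proof.
  intros He Hd q eps N Heps.
  destruct (avoid e He (map (fun j => itr B A j z) (seq 0 (S N))) q eps Heps) as [c [r [Hr Hc]]].
  destruct (Hd c r Hr) as [y [[n En] Hy]]. subst y.
  destruct (Hc _ Hy) as [H1 H2]. exists n. split; auto.
  destruct (Nat.lt_ge_cases N n) as [h|h]; auto. exfalso. apply H2.
  apply (in_map (fun j => itr B A j z)). apply in_seq. lia.
Qed.

Lemma choice_fun {A0 B0 : Type} (b0 : B0) (P : A0 -> B0 -> Prop) :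
  (forall a, exists b, P a b) -> exists f, forall a, P a (f a).
Proof.
  intro H. exists (fun a => epsilon (inhabits b0) (P a)). intro a. apply epsilon_spec. apply H.
Qed.

Section Baire.
Variables (A : B -> B) (tc : nat -> B) (tr : nat -> R).
Hypotheses (HAa : addit B A) (HAb : bnd B A) (Htr : forall j, 0 < tr j)
  (Htrans : forall c r j, 0 < r -> exists z n, dst z c < r /\ dst (itr B A n z) (tc j) < tr j).

Definition Pb j (cr cr' : B * R) : Prop :=
  0 < snd cr' /\ snd cr' <= snd cr / 4 /\ snd cr' < / (INR j + 1) /\
  dst (fst cr') (fst cr) < snd cr / 2 /\
  forall w, dst w (fst cr') < 3 * snd cr' -> exists n, dst (itr B A n w) (tc j) < tr j.

Lemma Pb_ex j cr : 0 < snd cr -> exists cr', Pb j cr cr'.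
Proof.
  destruct cr as [c r]. simpl. intro Hr.
  destruct (Htrans c (r/2) j) as [z [n [Hz Hn]]]. lra.
  set (e := tr j - dst (itr B A n z) (tc j)).
  destruct (itr_bnd B A n HAb) as [M [HM HMb]].
  set (d := e / M).
  assert (Hd : 0 < d). unfold d, e. apply Rdiv_lt_0_compat; lra.
  assert (Hj : 0 < / (INR j + 1)). apply Rinv_0_lt_compat. assert (H:=pos_INR j). lra.
  set (r' := Rmin (Rmin (r/4) (d/3)) (/ (INR j + 1) / 2)).
  assert (H1 : r' <= Rmin (r/4) (d/3)) by apply Rmin_l.
  assert (H2 : r' <= / (INR j + 1) / 2) by apply Rmin_r.
  assert (H3 := Rmin_l (r/4) (d/3)). assert (H4 := Rmin_r (r/4) (d/3)).
  assert (Hr' : 0 < r').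
  { unfold r'. apply Rmin_glb_lt. apply Rmin_glb_lt; lra. lra. }
  exists (z, r'). unfold Pb; simpl. fold r'. repeat split; try lra.
  intros w Hw. exists n.
  assert (H5 := dist_tri B (itr B A n w) (itr B A n z) (tc j)).
  assert (H6 : dst (itr B A n w) (itr B A n z) <= M * dst w z).
  { apply bnd_dist; auto. apply itr_addit; auto. }
  assert (H7 : M * dst w z < M * d). apply Rmult_lt_compat_l; auto. lra.
  assert (H8 : M * d = e). unfold d. field. lra.
  unfold e in H8. lra.
Qed.

Lemma baire : exists z, forall j, exists n, dst (itr B A n z) (tc j) < tr j.
Proof.
  set (g := fun j cr => epsilon (inhabits cr) (Pb j cr)).
  assert (Hg : forall j cr, 0 < snd cr -> Pb j cr (g j cr)).
  { intros j cr H. unfold g. apply epsilon_spec. apply Pb_ex; auto. }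
  set (s := fix s (j : nat) : B * R := match j with O => (vz, 1) | S j => g j (s j) end).
  assert (Hs : forall j, 0 < snd (s j) /\ Pb j (s j) (s (S j))).
  { induction j.
    - assert (0 < snd (s O)) by (simpl; lra). split; [auto|]. apply Hg; auto.
    - destruct IHj as [_ HP]. assert (0 < snd (s (S j))) by (destruct HP; auto).
      split; [auto|]. apply Hg; auto. }
  assert (HD : forall j m, dst (fst (s (m + j)%nat)) (fst (s j)) + 2 * snd (s (m+j)%nat) <= 2 * snd (s j)).
  { intros j m. induction m.
    - simpl. rewrite dist_self. lra.
    - destruct (Hs (m + j)%nat) as [_ [P1 [P2 [P3 [P4 _]]]]].
      change (S m + j)%nat with (S (m + j)).
      assert (T := dist_tri B (fst (s (S (m+j)))) (fst (s (m+j)%nat)) (fst (s j))). lra. }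
  assert (HD' : forall j m, (j <= m)%nat -> dst (fst (s m)) (fst (s j)) < 2 * snd (s j)).
  { intros j m Hjm. replace m with ((m - j) + j)%nat by lia. assert (H:=HD j (m-j)%nat).
    assert (H' := proj1 (Hs ((m-j)+j)%nat)). lra. }
  assert (Hc : cauchy B (fun k => fst (s k))).
  { intros eps Heps. destruct (INR_archimed eps 4 Heps) as [n Hn].
    exists (S n). intros a b Ha Hb. simpl.
    assert (T := dist_tri B (fst (s a)) (fst (s (S n))) (fst (s b))).
    rewrite (dist_sym B (fst (s (S n)))) in T.
    assert (T1 := HD' (S n) a Ha). assert (T2 := HD' (S n) b Hb).
    destruct (Hs n) as [_ [_ [_ [P2 _]]]].
    assert (HP : 0 < INR n + 1) by (assert (H:=pos_INR n); lra).
    assert (snd (s (S n)) * (INR n + 1) < 1).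
    { apply (Rmult_lt_compat_r (INR n + 1)) in P2; auto. rewrite Rinv_l in P2; lra. }
    assert (snd (s (S n)) * (INR n + 1) * eps < eps) by (apply Rmult_lt_compat_r with (r:=eps) in H; lra).
    assert (0 <= snd (s (S n))) by (destruct (Hs (S n)); lra).
    nra. }
  destruct (ax_complete K B _ Hc) as [c Hcv]. exists c. intro j.
  destruct (Hs j) as [_ [_ [_ [_ [_ P5]]]]]. apply P5.
  destruct (Hs (S j)) as [Hp _].
  destruct (Hcv (snd (s (S j))) Hp) as [N HN].
  assert (T := dist_tri B c (fst (s (Nat.max N (S j)))) (fst (s (S j)))).
  rewrite (dist_sym B c (fst (s (Nat.max N (S j))))) in T. assert (T1 := HN (Nat.max N (S j)) ltac:(lia)).
  assert (T2 := HD' (S j) (Nat.max N (S j)) ltac:(lia)). lra.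
Qed.
End Baire.

End Anal.
Section Main.
Context {K : Scal} {sf : SF K} (B : Banach K).
Notation vad := (vadd B).
Notation vop := (vopp B).
Notation vz := (vzero B).
Notation vsc := (vscal B).
Notation nrm := (vnorm B).
Notation dst := (Defs.dist B).

Lemma conv_inv (u : nat -> B) a c : 0 < c -> (forall k, dst (u k) a < c / (INR k + 1)) -> seq_conv B u a.
Proof.
  intros Hc H eps He. destruct (INR_archimed eps c He) as [n Hn]. exists n. intros k Hk.
  eapply Rlt_le_trans. apply H. apply le_INR in Hk.
  assert (Hp : 0 < INR k + 1) by (assert (h := pos_INR k); lra).
  apply (Rmult_le_reg_r (INR k + 1)); auto. unfold Rdiv. rewrite Rmult_assoc, Rinv_l by lra. nra.
Qed.

Lemma hc_cc A : HypercyclicityCriterion B A -> CyclicityCriterion B A.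
Proof.
  intros [X0 [Y0 [n [Sk [H1 [H2 [_ [_ [H5 [H6 H7]]]]]]]]]].
  exists X0, Y0, (fun k => mono (n k)), Sk. repeat split; auto.
  - intros x Hx. eapply conv_ext. 2: apply (H5 x Hx). intro k. simpl. rewrite peval_mono. reflexivity.
  - intros x Hx. eapply conv_ext. 2: apply (H7 x Hx). intro k. simpl. rewrite peval_mono. reflexivity.
Qed.

Lemma hyp_cyc A : hypercyclic B A -> cyclic B A.
Proof.
  intros [x Hx]. exists x. intros y eps He. destruct (Hx y eps He) as [w [[n En] Hw]].
  exists w. split; auto. exists (mono n). rewrite peval_mono. auto.
Qed.

Lemma cc_trans A C : (forall p, exists q, forall x, peval B A p x = peval B C q x) ->
  CyclicityCriterion B A -> CyclicityCriterion B C.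
Proof.
  intros Ht [V [W [p [Sk [H1 [H2 [H3 [H4 H5]]]]]]]].
  destruct (choice_fun B nil (fun k q => forall x, peval B A (p k) x = peval B C q x)) as [f Hf].
  { intro k. apply Ht. }
  exists V, W, f, Sk. repeat split; auto.
  - intros x Hx. eapply conv_ext. 2: apply (H3 x Hx). intro k. apply Hf.
  - intros x Hx. eapply conv_ext. 2: apply (H5 x Hx). intro k. apply Hf.
Qed.

Lemma cyc_trans A C : (forall p, exists q, forall x, peval B A p x = peval B C q x) ->
  cyclic B A -> cyclic B C.
Proof.
  intros Ht [x Hx]. exists x. intros y eps He. destruct (Hx y eps He) as [w [[p Ep] Hw]].
  exists w. split; auto. destruct (Ht p) as [q Hq]. exists q. rewrite Ep. apply Hq.
Qed.

Lemma lin_rel A C lam : bounded_linear B A -> bounded_linear B C ->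
  (forall x, A x = vad (vsc lam x) (C x)) ->
  forall x, C x = vad (vsc (smul K m1 lam) x) (A x).
Proof.
  intros _ _ H x. rewrite H, <- ax_scalA, scalm1, ax_addA, addNl, add0l. reflexivity.
Qed.

Lemma cyc2_cc A : bounded_linear B A -> cyclic (prodOps B) (dsum A) -> CyclicityCriterion B A.
Proof.
  intros HA [[u v] Hd].
  assert (Aa := bl_addit B A HA). assert (Ah := bl_homog B A HA). assert (Ab := bl_bnd B A HA).
  assert (Hstep : forall k : nat, exists pr : list K * list K,
    dst (peval B A (snd pr) u) u < / (INR k + 1) /\ nrm (peval B A (snd pr) v) < / (INR k + 1) /\
    nrm (peval B A (fst pr) u) < / (INR k + 1) /\
    dst (peval B A (fst pr) (peval B A (snd pr) v)) u < 2 * / (INR k + 1)).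
  { intro k. set (e := / (INR k + 1)). assert (He : 0 < e). unfold e. apply Rinv_0_lt_compat. assert (h:=pos_INR k). lra.
    destruct (Hd (u, vz) e He) as [w1 [[r Er] Hr]]. subst w1. rewrite peval_dsum in Hr.
    rewrite dist_prod in Hr. simpl in Hr.
    assert (R1 := Rle_lt_trans _ _ _ (Rmax_l _ _) Hr). assert (R2 := Rle_lt_trans _ _ _ (Rmax_r _ _) Hr).
    destruct (peval_bnd B A r Ab) as [L [HL HLb]].
    assert (He' : 0 < Rmin e (e / L)). apply Rmin_glb_lt; auto. apply Rdiv_lt_0_compat; auto.
    destruct (Hd (vz, u) _ He') as [w2 [[p Ep] Hp]]. subst w2. rewrite peval_dsum in Hp.
    rewrite dist_prod in Hp. simpl in Hp.
    assert (P1 := Rle_lt_trans _ _ _ (Rmax_l _ _) Hp). assert (P2 := Rle_lt_trans _ _ _ (Rmax_r _ _) Hp).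
    assert (M1 := Rmin_l e (e/L)). assert (M2 := Rmin_r e (e/L)).
    exists (p, r). simpl. rewrite dist0 in R2, P1. repeat split; try lra.
    rewrite peval_peval; auto.
    assert (T := dist_tri B (peval B A r (peval B A p v)) (peval B A r u) u).
    assert (T2 : dst (peval B A r (peval B A p v)) (peval B A r u) <= L * dst (peval B A p v) u).
    { apply bnd_dist; auto. apply peval_addit; auto. }
    assert (T3 : L * dst (peval B A p v) u < L * (e / L)). apply Rmult_lt_compat_l; auto. lra.
    assert (T4 : L * (e / L) = e) by (field; lra). lra. }
  destruct (choice_fun B (nil, nil) _ Hstep) as [f Hf].
  set (z := fun k => peval B A (snd (f k)) v).
  set (qw := fun w => epsilon (inhabits nil) (fun q => w = peval B A q u)).
  assert (Hqw : forall w, (exists q, w = peval B A q u) -> w = peval B A (qw w) u).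
  { intros w Hw. unfold qw. exact (epsilon_spec (inhabits nil) (fun q => w = peval B A q u) Hw). }
  assert (Cz : seq_conv B z vz).
  { apply (conv_inv _ _ 1). lra. intro k. rewrite dist0. destruct (Hf k) as [_ [H _]]. unfold z.
    unfold Rdiv. rewrite Rmult_1_l. exact H. }
  assert (Cp : seq_conv B (fun k => peval B A (fst (f k)) u) vz).
  { apply (conv_inv _ _ 1). lra. intro k. rewrite dist0. destruct (Hf k) as [_ [_ [H _]]].
    unfold Rdiv. rewrite Rmult_1_l. exact H. }
  assert (Cpz : seq_conv B (fun k => peval B A (fst (f k)) (z k)) u).
  { apply (conv_inv _ _ 2). lra. intro k. destruct (Hf k) as [_ [_ [_ H]]]. exact H. }
  assert (Dn : dense B (fun w => exists q, w = peval B A q u)).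
  { intros y eps He. destruct (Hd (y, y) eps He) as [w [[q Eq] Hw]]. subst w.
    rewrite peval_dsum, dist_prod in Hw. simpl in Hw. exists (peval B A q u). split. eauto.
    eapply Rle_lt_trans. 2: apply Hw. apply Rmax_l. }
  exists (fun w => exists q, w = peval B A q u), (fun w => exists q, w = peval B A q u),
    (fun k => fst (f k)), (fun k w => peval B A (qw w) (z k)).
  split; [exact Dn|split; [exact Dn|split; [|split]]].
  - intros x [q Eq]. subst x.
    assert (C := conv_map B (peval B A q) _ _ (peval_addit B A q Aa) (peval_bnd B A q Ab) Cp).
    rewrite (addit_0 B _ (peval_addit B A q Aa)) in C.
    eapply conv_ext. 2: exact C. intro k. simpl. apply peval_peval; auto.
  - intros x Hx.
    assert (C := conv_map B (peval B A (qw x)) _ _ (peval_addit B A _ Aa) (peval_bnd B A _ Ab) Cz).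
    rewrite (addit_0 B _ (peval_addit B A _ Aa)) in C. exact C.
  - intros x Hx.
    assert (C := conv_map B (peval B A (qw x)) _ _ (peval_addit B A _ Aa) (peval_bnd B A _ Ab) Cpz).
    rewrite <- (Hqw x Hx) in C.
    eapply conv_ext. 2: exact C. intro k. simpl. apply peval_peval; auto.
Qed.
End Main.
Section Main2.
Context {K : Scal} {sf : SF K} (B : Banach K).
Notation vad := (vadd B).
Notation vop := (vopp B).
Notation vz := (vzero B).
Notation vsc := (vscal B).
Notation nrm := (vnorm B).
Notation dst := (Defs.dist B).

Lemma trans2 A x : bounded_linear B A -> CyclicityCriterion B A ->
  dense B (fun y => exists n, y = itr B A n x) ->
  forall a1 a2 b1 b2 eps, 0 < eps -> exists z1 z2 n,
    dst z1 a1 < eps /\ dst z2 a2 < eps /\ dst (itr B A n z1) b1 < eps /\ dst (itr B A n z2) b2 < eps.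
Proof.
  intros HA [V [W [p [Sk [HV [HW [H1 [H2 H3]]]]]]]] Hx a1 a2 b1 b2 eps Heps.
  assert (Aa := bl_addit B A HA). assert (Ah := bl_homog B A HA). assert (Ab := bl_bnd B A HA).
  set (d := eps / 5). assert (Hd : 0 < d) by (unfold d; lra). assert (Hde : eps = 5 * d) by (unfold d; lra).
  destruct (HV a1 d Hd) as [v1 [Vv1 Hv1]]. destruct (HV a2 d Hd) as [v2 [Vv2 Hv2]].
  destruct (HW b1 d Hd) as [w1 [Ww1 Hw1]]. destruct (HW b2 d Hd) as [w2 [Ww2 Hw2]].
  destruct (H1 v1 Vv1 d Hd) as [N1 HN1]. destruct (H1 v2 Vv2 d Hd) as [N2 HN2].
  destruct (H2 w1 Ww1 d Hd) as [N3 HN3]. destruct (H2 w2 Ww2 d Hd) as [N4 HN4].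
  destruct (H3 w1 Ww1 d Hd) as [N5 HN5]. destruct (H3 w2 Ww2 d Hd) as [N6 HN6].
  set (k := Nat.max N1 (Nat.max N2 (Nat.max N3 (Nat.max N4 (Nat.max N5 N6))))).
  specialize (HN1 k ltac:(lia)). specialize (HN2 k ltac:(lia)). specialize (HN3 k ltac:(lia)).
  specialize (HN4 k ltac:(lia)). specialize (HN5 k ltac:(lia)). specialize (HN6 k ltac:(lia)).
  simpl in *.
  set (P := peval B A (p k)).
  assert (Pa : addit B P) by (apply peval_addit; auto).
  assert (Hu : forall v w a b, dst v a < d -> dst w b < d -> dst (P v) vz < d -> dst (Sk k w) vz < d ->
     dst (P (Sk k w)) w < d ->
     dst (vad v (Sk k w)) a < 2 * d /\ dst (P (vad v (Sk k w))) b < 3 * d).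
  { intros v w a b E1 E2 E3 E4 E5. split.
    - rewrite <- (ax_add0 K B a). eapply Rle_lt_trans. apply dist_add. lra.
    - rewrite Pa. rewrite <- (add0l B b). eapply Rle_lt_trans. apply dist_add.
      assert (T := dist_tri B (P (Sk k w)) w b). lra. }
  destruct (Hu v1 w1 a1 b1) as [U1 U1']; auto.
  destruct (Hu v2 w2 a2 b2) as [U2 U2']; auto.
  set (u1 := vad v1 (Sk k w1)) in *. set (u2 := vad v2 (Sk k w2)) in *.
  destruct (peval_bnd B A (p k) Ab) as [L [HL HLb]]. fold P in HLb.
  assert (Hdl : 0 < Rmin d (d / L)). apply Rmin_glb_lt; auto. apply Rdiv_lt_0_compat; auto.
  assert (M1 := Rmin_l d (d/L)). assert (M2 := Rmin_r d (d/L)).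
  destruct (Hx u1 _ Hdl) as [o1 [[c1 Ec1] Ho1]]. destruct (Hx u2 _ Hdl) as [o2 [[c2 Ec2] Ho2]].
  assert (Po : forall o u, dst o u < Rmin d (d / L) -> dst (P o) (P u) < d).
  { intros o u E. eapply Rle_lt_trans. apply (bnd_dist B P L); auto.
    apply Rmult_lt_reg_l with (r := /L). apply Rinv_0_lt_compat; auto.
    rewrite <- Rmult_assoc, Rinv_l, Rmult_1_l by lra.
    eapply Rlt_le_trans. exact E. apply Rle_trans with (d/L); [exact M2|right; unfold Rdiv; ring]. }
  destruct (itr_bnd B A c1 Ab) as [Q1 [HQ1 HQ1b]]. destruct (itr_bnd B A c2 Ab) as [Q2 [HQ2 HQ2b]].
  assert (HQ : 0 < Q1 + Q2) by lra.
  assert (Hdq : 0 < d / (Q1 + Q2)) by (apply Rdiv_lt_0_compat; auto).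
  destruct (Hx (P x) _ Hdq) as [y [[n En] Hy]]. subst y.
  assert (Hc : forall c Q, 0 < Q -> Q <= Q1 + Q2 -> (forall y, nrm (itr B A c y) <= Q * nrm y) ->
     dst (itr B A n (itr B A c x)) (P (itr B A c x)) < d).
  { intros c Q HQ0 HQle HQb. rewrite itr_itr.
    unfold P. rewrite <- (peval_comm B A (itr B A c)); [|apply itr_addit; auto|apply itr_homog; auto|].
    2: { intro y. symmetry. apply itr_comm. }
    fold P.
    eapply Rle_lt_trans. apply (bnd_dist B _ Q); auto. apply itr_addit; auto.
    apply Rlt_le_trans with (Q * (d / (Q1 + Q2))).
    apply Rmult_lt_compat_l; auto.
    apply Rle_trans with ((Q1 + Q2) * (d / (Q1 + Q2))).
    apply Rmult_le_compat_r; lra. right. field. lra. }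
  subst o1 o2.
  exists (itr B A c1 x), (itr B A c2 x), n. split; [|split; [|split]].
  - assert (T := dist_tri B (itr B A c1 x) u1 a1). lra.
  - assert (T := dist_tri B (itr B A c2 x) u2 a2). lra.
  - assert (T1 := Hc c1 Q1 HQ1 ltac:(lra) HQ1b). assert (T2 := Po _ _ Ho1).
    assert (T3 := dist_tri B (itr B A n (itr B A c1 x)) (P (itr B A c1 x)) b1).
    assert (T4 := dist_tri B (P (itr B A c1 x)) (P u1) b1). lra.
  - assert (T1 := Hc c2 Q2 HQ2 ltac:(lra) HQ2b). assert (T2 := Po _ _ Ho2).
    assert (T3 := dist_tri B (itr B A n (itr B A c2 x)) (P (itr B A c2 x)) b2).
    assert (T4 := dist_tri B (P (itr B A c2 x)) (P u2) b2). lra.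
Qed.
End Main2.
Section Main3.
Context {K : Scal} {sf : SF K} (B : Banach K).
Notation vad := (vadd B).
Notation vop := (vopp B).
Notation vz := (vzero B).
Notation vsc := (vscal B).
Notation nrm := (vnorm B).
Notation dst := (Defs.dist B).

Lemma cc_hyp2 A : bounded_linear B A -> CyclicityCriterion B A -> hypercyclic B A ->
  hypercyclic (prodOps B) (dsum A).
Proof.
  intros HA HC [x Hx].
  assert (HA2 : bounded_linear (prodB B) (dsum A)) by (apply dsum_bl; auto).
  set (tc := fun j : nat => (itr B A (fst (of_nat (fst (of_nat j)))) x,
                             itr B A (snd (of_nat (fst (of_nat j)))) x) : prodB B).
  set (tr := fun j : nat => / (INR (snd (of_nat j)) + 1)).
  assert (Htr : forall j, 0 < tr j).
  { intro j. unfold tr. apply Rinv_0_lt_compat. assert (h := pos_INR (snd (of_nat j))). lra. }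
  destruct (baire (prodB B) (dsum A) tc tr (bl_addit _ _ HA2) (bl_bnd _ _ HA2) Htr) as [z Hz].
  { intros [c1 c2] r j Hr.
    assert (He : 0 < Rmin r (tr j)) by (apply Rmin_glb_lt; auto).
    destruct (trans2 B A x HA HC Hx c1 c2 (fst (tc j)) (snd (tc j)) _ He)
      as [z1 [z2 [n [E1 [E2 [E3 E4]]]]]].
    assert (R1 := Rmin_l r (tr j)). assert (R2 := Rmin_r r (tr j)).
    exists (z1, z2), n. change (Defs.dist (prodB B)) with (Defs.dist (prodOps B)).
    change (itr (prodB B)) with (itr (prodOps B)). rewrite itr_dsum, !dist_prod. unfold tc in *. simpl in *.
    split; apply Rmax_lub_lt; lra. }
  exists z. intros [y1 y2] eps Heps.
  assert (He2 : 0 < eps / 2) by lra.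
  destruct (INR_archimed (eps/2) 1 He2) as [m Hm].
  destruct (Hx y1 _ He2) as [o1 [[i1 E1] H1]]. destruct (Hx y2 _ He2) as [o2 [[i2 E2] H2]].
  subst o1 o2.
  destruct (Hz (to_nat (to_nat (i1, i2), m))) as [n Hn].
  exists (itr (prodOps B) (dsum A) n z). split. eauto.
  unfold tc, tr in Hn. rewrite cancel_of_to in Hn. cbn [fst snd] in Hn. rewrite cancel_of_to in Hn. cbn [fst snd] in Hn.
  assert (T := dist_tri (prodB B) (itr (prodOps B) (dsum A) n z) (itr B A i1 x, itr B A i2 x) (y1, y2)).
  assert (Hm' : / (INR m + 1) < eps / 2).
  { assert (h := pos_INR m). apply (Rmult_lt_reg_r (INR m + 1)). lra.
    rewrite Rinv_l by lra. lra. }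
  change (Defs.dist (prodOps B) (itr (prodOps B) (dsum A) n z) (y1, y2) < eps).
  change (Defs.dist (prodB B)) with (Defs.dist (prodOps B)) in T, Hn.
  change (itr (prodB B)) with (itr (prodOps B)) in T, Hn.
  rewrite (dist_prod B (itr B A i1 x, itr B A i2 x) (y1,y2)) in T. cbn [fst snd] in T.
  assert (Rmax (Defs.dist B (itr B A i1 x) y1) (Defs.dist B (itr B A i2 x) y2) < eps / 2)
    by (apply Rmax_lub_lt; auto).
  lra.
Qed.

End Main3.
Section Main4.
Context {K : Scal} {sf : SF K} (B : Banach K).
Notation vad := (vadd B).
Notation vop := (vopp B).
Notation vz := (vzero B).
Notation vsc := (vscal B).
Notation nrm := (vnorm B).
Notation dst := (Defs.dist B).

Lemma hyp2_hc A (e : B) : e <> vz -> bounded_linear B A -> hypercyclic (prodOps B) (dsum A) ->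
  HypercyclicityCriterion B A.
Proof.
  intros He HA [[x y] Hd].
  assert (Aa := bl_addit B A HA). assert (Ah := bl_homog B A HA). assert (Ab := bl_bnd B A HA).
  assert (Hx : dense B (fun w => exists n, w = itr B A n x)).
  { intros y0 eps Heps. destruct (Hd (y0, y0) eps Heps) as [w [[n En] Hw]]. subst w.
    rewrite itr_dsum, dist_prod in Hw. cbn [fst snd] in Hw.
    exists (itr B A n x). split. eauto. eapply Rle_lt_trans. 2: exact Hw. apply Rmax_l. }
  assert (Hd' : dense (prodB B) (fun w => exists n, w = itr (prodB B) (dsum A) n (x, y))) by exact Hd.
  assert (He2 : ((e, e) : prodB B) <> vzero (prodB B)).
  { intro H. injection H. intros _ H'. exact (He H'). }
  assert (Key : forall (kN : nat * nat), exists nz : nat * B,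
    let eps := / (INR (fst kN) + 1) in
    (snd kN < fst nz)%nat /\ nrm (itr B A (fst nz) x) < eps /\ nrm (snd nz) < eps /\
    dst (itr B A (fst nz) (snd nz)) x < eps).
  { intros [k N]. cbn [fst snd].
    assert (Heps : 0 < / (INR k + 1)). apply Rinv_0_lt_compat. assert (h := pos_INR k). lra.
    set (eps := / (INR k + 1)) in *.
    assert (He' : 0 < eps / 2) by lra.
    destruct (Hd (x, vz) _ He') as [w [[r Er] Hr]]. subst w.
    rewrite itr_dsum, dist_prod in Hr. cbn [fst snd] in Hr.
    assert (R1 := Rle_lt_trans _ _ _ (Rmax_l _ _) Hr). assert (R2 := Rle_lt_trans _ _ _ (Rmax_r _ _) Hr).
    rewrite dist0 in R2.
    destruct (itr_bnd B A r Ab) as [Q [HQ HQb]].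
    assert (HQ2 : 0 < Rmin eps (eps / (2 * Q))).
    { apply Rmin_glb_lt; auto. apply Rdiv_lt_0_compat; lra. }
    destruct (hc_often (prodB B) (dsum A) (x, y) (e, e) He2 Hd' ((vz, x) : prodB B) _ N HQ2)
      as [n [Hn Hn2]].
    change (itr (prodB B)) with (itr (prodOps B)) in Hn2.
    change (Defs.dist (prodB B)) with (Defs.dist (prodOps B)) in Hn2.
    rewrite itr_dsum, dist_prod in Hn2. cbn [fst snd] in Hn2.
    assert (S1 := Rle_lt_trans _ _ _ (Rmax_l _ _) Hn2). assert (S2 := Rle_lt_trans _ _ _ (Rmax_r _ _) Hn2).
    rewrite dist0 in S1.
    assert (M1 := Rmin_l eps (eps / (2 * Q))). assert (M2 := Rmin_r eps (eps / (2 * Q))).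
    exists (n, itr B A r y). simpl. split; [auto|split; [lra|split; [lra|]]].
    rewrite itr_itr.
    assert (T := dist_tri B (itr B A r (itr B A n y)) (itr B A r x) x).
    assert (T2 : dst (itr B A r (itr B A n y)) (itr B A r x) <= Q * dst (itr B A n y) x).
    { apply bnd_dist; auto. apply itr_addit; auto. }
    assert (T3 : Q * dst (itr B A n y) x < Q * (eps / (2 * Q))).
    { apply Rmult_lt_compat_l; auto. lra. }
    assert (T4 : Q * (eps / (2 * Q)) = eps / 2) by (field; lra).
    lra. }
  destruct (choice_fun B (O, vz) _ Key) as [G HG].
  set (ns := fix ns k := match k with O => fst (G (O, O)) | S k' => fst (G (S k', ns k')) end).
  set (pv := fun k => match k with O => O | S k' => ns k' end).
  assert (Ens : forall k, ns k = fst (G (k, pv k))) by (intros [|k]; reflexivity).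
  set (zs := fun k => snd (G (k, pv k))).
  assert (HGk : forall k, (pv k < ns k)%nat /\ nrm (itr B A (ns k) x) < 1 / (INR k + 1) /\
      nrm (zs k) < 1 / (INR k + 1) /\ dst (itr B A (ns k) (zs k)) x < 1 / (INR k + 1)).
  { intro k. rewrite Ens. unfold zs. destruct (HG (k, pv k)) as [A1 [A2 [A3 A4]]].
    cbn [fst snd] in *. unfold Rdiv. rewrite Rmult_1_l. auto. }
  set (mw := fun w => epsilon (inhabits O) (fun m => w = itr B A m x)).
  assert (Hmw : forall w, (exists m, w = itr B A m x) -> w = itr B A (mw w) x).
  { intros w Hw. exact (epsilon_spec (inhabits O) (fun m => w = itr B A m x) Hw). }
  assert (C1 : seq_conv B (fun k => itr B A (ns k) x) vz).
  { apply (conv_inv B _ _ 1). lra. intro k. rewrite dist0. apply HGk. }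
  assert (C2 : seq_conv B zs vz).
  { apply (conv_inv B _ _ 1). lra. intro k. rewrite dist0. apply HGk. }
  assert (C3 : seq_conv B (fun k => itr B A (ns k) (zs k)) x).
  { apply (conv_inv B _ _ 1). lra. intro k. apply HGk. }
  exists (fun w => exists m, w = itr B A m x), (fun w => exists m, w = itr B A m x), ns,
    (fun k w => itr B A (mw w) (zs k)).
  split; [exact Hx|split; [exact Hx|split; [|split; [|split; [|split]]]]].
  - intro k. destruct (HGk k) as [H _]. destruct k; [exact H|change (ns k < ns (S k))%nat in H; lia].
  - intro k. destruct (HGk (S k)) as [H _]. exact H.
  - intros w [m Em]. subst w.
    assert (C := conv_map B (itr B A m) _ _ (itr_addit B A m Aa) (itr_bnd B A m Ab) C1).
    rewrite (addit_0 B _ (itr_addit B A m Aa)) in C.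
    eapply conv_ext. 2: exact C. intro k. simpl. symmetry. apply itr_itr.
  - intros w Hw.
    assert (C := conv_map B (itr B A (mw w)) _ _ (itr_addit B A _ Aa) (itr_bnd B A _ Ab) C2).
    rewrite (addit_0 B _ (itr_addit B A _ Aa)) in C. exact C.
  - intros w Hw.
    assert (C := conv_map B (itr B A (mw w)) _ _ (itr_addit B A _ Aa) (itr_bnd B A _ Ab) C3).
    rewrite <- (Hmw w Hw) in C.
    eapply conv_ext. 2: exact C. intro k. simpl. apply itr_itr.
Qed.
End Main4.
Definition SF_Kof (kk : KKind) : SF (Kof kk).
Proof.
  destruct kk.
  - refine (@Build_SF RScal _ _ _ (-1) _ _ _ (fun t : R => t) _); simpl.
    + ring.
    + apply Rabs_R0.
    + intro a. apply Rabs_pos.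
    + ring.
    + rewrite Rabs_left by lra. ring.
    + intros a b. apply Rmult_comm.
    + intro t. reflexivity.
  - refine (@Build_SF CScal _ _ _ ((-1)%R, 0%R) _ _ _ (fun t : R => (t, 0%R)) _); simpl.
    + unfold Cadd. simpl. f_equal; ring.
    + unfold Cabs. simpl. replace (0 * 0 + 0 * 0) with 0 by ring. apply sqrt_0.
    + intro a. apply sqrt_pos.
    + unfold Cadd. simpl. f_equal; ring.
    + unfold Cabs. simpl. replace (-1 * -1 + 0 * 0) with 1 by ring. apply sqrt_1.
    + intros [a b] [c d]. unfold Cmul. simpl. f_equal; ring.
    + intro t. unfold Cabs. simpl. replace (t * t + 0 * 0) with (Rsqr t) by (unfold Rsqr; ring).
      apply sqrt_Rsqr_abs.
Defined.

Theorem mainTheorem1 (kk : KKind) (X : Banach (Kof kk))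
  (Hsep : separable X) (Hinf : infinite_dim X)
  (T S : X -> X) (HT : bounded_linear X T) (HS : bounded_linear X S)
  (lam : Kof kk) (HTS : forall x : X, T x = vadd X (vscal X lam x) (S x))
  (Hhc : hypercyclic X T) :
  (HypercyclicityCriterion X T <-> CyclicityCriterion X T) /\
  (CyclicityCriterion X T <-> CyclicityCriterion X S) /\
  (CyclicityCriterion X S <-> cyclic (prodOps X) (dsum S)) /\
  (cyclic (prodOps X) (dsum S) <-> cyclic (prodOps X) (dsum T)) /\
  (cyclic (prodOps X) (dsum T) <-> hypercyclic (prodOps X) (dsum T)).
Proof.
  pose proof (SF_Kof kk) as sf.
  assert (Hne : exists e : X, e <> vzero X).
  { destruct (classic (exists e : X, e <> vzero X)) as [H|H]; auto. exfalso. apply Hinf.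
    exists nil. intro y. exists nil. split. intros p [].
    simpl. apply NNPP. intro H'. apply H. exists y. auto. }
  destruct Hne as [e He].
  assert (HST := lin_rel X T S lam HT HS HTS).
  assert (ptTS := ptrans X T S lam (bl_addit X S HS) (bl_homog X S HS) HTS).
  assert (ptST := ptrans X S T _ (bl_addit X T HT) (bl_homog X T HT) HST).
  assert (HT2 := dsum_bl X T HT). assert (HS2 := dsum_bl X S HS).
  assert (ptTSp := ptrans (prodB X) (dsum T) (dsum S) lam (bl_addit (prodB X) _ HS2)
    (bl_homog (prodB X) _ HS2) ltac:(intros [a b]; unfold dsum; simpl; rewrite !HTS; reflexivity)).
  assert (ptSTp := ptrans (prodB X) (dsum S) (dsum T) _ (bl_addit (prodB X) _ HT2)
    (bl_homog (prodB X) _ HT2) ltac:(intros [a b]; unfold dsum; simpl; rewrite !HST; reflexivity)).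
  assert (i_ii := hc_cc X T).
  assert (ii_vi : CyclicityCriterion X T -> hypercyclic (prodOps X) (dsum T))
    by (intro H; exact (cc_hyp2 X T HT H Hhc)).
  assert (vi_i := hyp2_hc X T e He HT).
  assert (vi_v : hypercyclic (prodOps X) (dsum T) -> cyclic (prodOps X) (dsum T))
    by exact (hyp_cyc (prodB X) (dsum T)).
  assert (v_iv : cyclic (prodOps X) (dsum T) -> cyclic (prodOps X) (dsum S))
    by exact (cyc_trans (prodB X) (dsum T) (dsum S) ptTSp).
  assert (iv_v : cyclic (prodOps X) (dsum S) -> cyclic (prodOps X) (dsum T))
    by exact (cyc_trans (prodB X) (dsum S) (dsum T) ptSTp).
  assert (iv_iii := cyc2_cc X S HS).
  assert (iii_ii := cc_trans X S T ptST).
  assert (ii_iii := cc_trans X T S ptTS).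
  tauto.
Qed.
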